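(* Let $\kappa$ be a regular infinite cardinal and $\mu$ a singular cardinal with $\mathrm{cf}(\mu)=\kappa$. For $X,X'\in\{{}^{\kappa}\mu,{}^{\mu}2,{}^{\mu}\kappa,{}^{\mu}\mu\}$, the spaces $(X,\mathrm{bd})$ and $(X',\mathrm{bd})$ are homeomorphic if and only if $w(X,\mathrm{bd})=w(X',\mathrm{bd})$.
   Context: For ordinals $\delta,\rho$, ${}^{\delta}\rho$ is the set of functions $\delta\to\rho$; for a partial function $s\colon\delta\rightharpoonup\rho$, $[s]=\{f\in{}^{\delta}\rho: s\subseteq f\}$. The bounded topology on ${}^{\delta}\rho$ has base $\{[s]: s\in{}^{\alpha}\rho,\ \alpha<\delta\}$; $(X,\mathrm{bd})$ denotes $X$ with this topology. $w$ denotes weight (least size of a base). *)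

(* Defs.v *)
Set Implicit Arguments.

(* A well-ordered set (= an ordinal up to isomorphism): strict total
   well-founded order. *)
Record WO := {
  car :> Type;
  lt : car -> car -> Prop;
  lt_irrefl : forall x, ~ lt x x;
  lt_trans : forall x y z, lt x y -> lt y z -> lt x z;
  lt_total : forall x y, x = y \/ lt x y \/ lt y x;
  lt_wf : well_founded lt
}.

Definition card_le (A B : Type) : Prop :=
  exists f : A -> B, forall x y, f x = f y -> x = y.
Definition card_eq (A B : Type) : Prop :=
  exists (f : A -> B) (g : B -> A),
    (forall x, g (f x) = x) /\ (forall y, f (g y) = y).

Definition is_cardinal (K : WO) : Prop :=
  forall x : K, ~ card_eq K {y : K | lt K y x}.

Definition infinite (A : Type) : Prop :=
  exists f : nat -> A, forall m n, f m = f n -> m = n.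

Definition cofinal (K : WO) (S : K -> Prop) : Prop :=
  forall x : K, exists y, S y /\ (x = y \/ lt K x y).

Definition cof_is (M K : WO) : Prop :=
  (exists S : M -> Prop, cofinal M S /\ card_eq {y : M | S y} K) /\
  (forall S : M -> Prop, cofinal M S -> card_le K {y : M | S y}).

Definition regular_cardinal (K : WO) : Prop :=
  infinite K /\ is_cardinal K /\ cof_is K K.

Definition singular_cardinal (M : WO) : Prop :=
  infinite M /\ is_cardinal M /\
  exists S : M -> Prop, cofinal M S /\ ~ card_le M {y : M | S y}.

Definition bd_open (D : WO) (R : Type) (U : (D -> R) -> Prop) : Prop :=
  forall f, U f -> exists a : D,
    forall g : D -> R, (forall b, lt D b a -> g b = f b) -> U g.

Definition homeomorphic (X Y : Type) (oX : (X -> Prop) -> Prop)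
    (oY : (Y -> Prop) -> Prop) : Prop :=
  exists (h : X -> Y) (h' : Y -> X),
    (forall x, h' (h x) = x) /\ (forall y, h (h' y) = y) /\
    (forall V, oY V -> oX (fun x => V (h x))) /\
    (forall U, oX U -> oY (fun y => U (h' y))).

Definition is_base (X : Type) (oX : (X -> Prop) -> Prop)
    (B : (X -> Prop) -> Prop) : Prop :=
  (forall U, B U -> oX U) /\
  (forall V, oX V -> forall x, V x -> exists U, B U /\ U x /\
      (forall y, U y -> V y)).

Definition weight_is (X : Type) (oX : (X -> Prop) -> Prop) (L : Type) : Prop :=
  (exists B, is_base oX B /\ card_eq {U : X -> Prop | B U} L) /\
  (forall B, is_base oX B -> card_le L {U : X -> Prop | B U}).

Definition same_weight (X Y : Type) (oX : (X -> Prop) -> Prop)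
    (oY : (Y -> Prop) -> Prop) : Prop :=
  exists L : Type, weight_is oX L /\ weight_is oY L.

Inductive space_kind := KappaMu | Mu2 | MuKappa | MuMu.

Definition sp_dom (kappa mu : WO) (k : space_kind) : WO :=
  match k with KappaMu => kappa | _ => mu end.
Definition sp_cod (kappa mu : WO) (k : space_kind) : Type :=
  match k with KappaMu => car mu | Mu2 => bool | MuKappa => car kappa
             | MuMu => car mu end.

Definition sp_open (kappa mu : WO) (k : space_kind) :=
  @bd_open (sp_dom kappa mu k) (sp_cod kappa mu k).

(* Main.v *)
Require Import Defs.
From Stdlib Require Wellfounded.Inverse_Image.
From Stdlib Require Import Classical ClassicalEpsilon FunctionalExtensionality PropExtensionality ProofIrrelevance Lia.

Definition le (W : WO) (x y : W) := x = y \/ lt W x y.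

Lemma le_refl (W : WO) (x : W) : le W x x.
Proof. left; reflexivity. Qed.

Lemma lt_asym (W : WO) (x y : W) : lt W x y -> ~ lt W y x.
Proof. intros h1 h2. exact (lt_irrefl W x (lt_trans W _ _ _ h1 h2)). Qed.

Lemma le_lt_trans (W : WO) (x y z : W) : le W x y -> lt W y z -> lt W x z.
Proof. intros [->|h] h'; [exact h'|exact (lt_trans W _ _ _ h h')]. Qed.

Lemma lt_le_trans (W : WO) (x y z : W) : lt W x y -> le W y z -> lt W x z.
Proof. intros h [<-|h']; [exact h|exact (lt_trans W _ _ _ h h')]. Qed.

Lemma le_trans (W : WO) (x y z : W) : le W x y -> le W y z -> le W x z.
Proof. intros [->|h] h'; [exact h'|right; exact (lt_le_trans W _ _ _ h h')]. Qed.

Lemma lt_le_weak (W : WO) (x y : W) : lt W x y -> le W x y.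
Proof. intro h; right; exact h. Qed.

Lemma lt_or_le (W : WO) (x y : W) : lt W x y \/ le W y x.
Proof. destruct (lt_total W x y) as [->|[h|h]]; [right; left; auto|left; auto|right; right; auto]. Qed.

Lemma not_lt_le (W : WO) (x y : W) : ~ lt W x y -> le W y x.
Proof. intro h. destruct (lt_or_le W x y); tauto. Qed.

Lemma le_not_lt (W : WO) (x y : W) : le W x y -> ~ lt W y x.
Proof. intros [->|h] h'. - exact (lt_irrefl W _ h'). - exact (lt_asym W _ _ h h'). Qed.

Lemma le_antisym (W : WO) (x y : W) : le W x y -> le W y x -> x = y.
Proof. intros [->|h] h'; auto. exfalso; exact (le_not_lt W _ _ h' h). Qed.

Lemma wo_min (W : WO) (P : W -> Prop) :
  (exists x, P x) -> exists x, P x /\ forall y, P y -> le W x y.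
Proof.
  intros [x Hx]. apply NNPP; intro Hn.
  assert (H : forall z, ~ P z).
  { intro z. induction z as [z IH] using (well_founded_ind (lt_wf W)). intro Pz.
    apply Hn. exists z. split; auto. intros y Py.
    destruct (lt_or_le W y z) as [h|h]; [exfalso; exact (IH y h Py)|exact h]. }
  exact (H x Hx).
Qed.

Definition choose {A : Type} {P : A -> Prop} (h : exists x, P x) : A :=
  proj1_sig (constructive_indefinite_description P h).
Lemma choose_spec {A : Type} {P : A -> Prop} (h : exists x, P x) : P (choose h).
Proof. unfold choose. exact (proj2_sig (constructive_indefinite_description P h)). Qed.

Definition injective {A B} (f : A -> B) := forall x y, f x = f y -> x = y.

Lemma card_le_refl A : card_le A A.
Proof. exists (fun x => x); auto. Qed.

Lemma card_le_trans A B C : card_le A B -> card_le B C -> card_le A C.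
Proof. intros [f hf] [g hg]. exists (fun x => g (f x)). intros x y h. auto. Qed.

Lemma card_eq_le A B : card_eq A B -> card_le A B.
Proof. intros [f [g [h1 h2]]]. exists f. intros x y h. rewrite <- (h1 x), <- (h1 y), h. auto. Qed.

Lemma card_eq_sym A B : card_eq A B -> card_eq B A.
Proof. intros [f [g [h1 h2]]]. exists g, f. auto. Qed.

Lemma card_eq_trans A B C : card_eq A B -> card_eq B C -> card_eq A C.
Proof. intros [f [g [h1 h2]]] [f' [g' [h1' h2']]]. exists (fun x => f' (f x)), (fun z => g (g' z)).
  split; intros; [rewrite h1', h1|rewrite h2, h2']; auto. Qed.

Lemma bij_card_eq A B (h : A -> B) : injective h -> (forall b, exists a, h a = b) -> card_eq A B.
Proof.
  intros hi hs. exists h, (fun b => choose (hs b)). split.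
  - intro a. apply hi. exact (choose_spec (hs (h a))).
  - intro b. exact (choose_spec (hs b)).
Qed.

Lemma SB A B : card_le A B -> card_le B A -> card_eq A B.
Proof.
  intros [f hf] [g hg].
  set (Cn := fix Cn (n : nat) : A -> Prop := match n with
       | O => fun a => ~ exists b, g b = a
       | S m => fun a => exists a', Cn m a' /\ a = g (f a') end).
  set (C := fun a => exists n, Cn n a).
  set (gi := fun a => epsilon (inhabits (f a)) (fun b => g b = a)).
  assert (Hgi : forall a, ~ C a -> g (gi a) = a).
  { intros a ha. unfold gi. apply (epsilon_spec (inhabits (f a)) (fun b => g b = a)).
    apply NNPP; intro hn. apply ha. exists O. exact hn. }
  set (h := fun a => if excluded_middle_informative (C a) then f a else gi a).
  apply (bij_card_eq A B h).
  - intros x y e. unfold h in e.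
    destruct (excluded_middle_informative (C x)) as [cx|cx];
    destruct (excluded_middle_informative (C y)) as [cy|cy].
    + auto.
    + exfalso. apply cy. destruct cx as [n hn]. exists (S n). simpl. exists x. split; auto.
      rewrite e. symmetry; auto.
    + exfalso. apply cx. destruct cy as [n hn]. exists (S n). simpl. exists y. split; auto.
      rewrite <- e. symmetry; auto.
    + rewrite <- (Hgi x cx), <- (Hgi y cy), e. reflexivity.
  - intro b. destruct (classic (C (g b))) as [c|c].
    + destruct c as [[|n] hn].
      * exfalso. apply hn. exists b; auto.
      * destruct hn as [a' [ha' e]]. apply hg in e. exists a'. unfold h.
        destruct (excluded_middle_informative (C a')) as [_|n']; [auto|].
        exfalso; apply n'; exists n; auto.
    + exists (g b). unfold h. destruct (excluded_middle_informative (C (g b))); [tauto|].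
      apply hg. apply Hgi. auto.
Qed.
Lemma Fix_eq' (A : Type) (R : A -> A -> Prop) (Rwf : well_founded R) (P : A -> Type)
  (F : forall x : A, (forall y : A, R y x -> P y) -> P x) (x : A) :
  Fix Rwf P F x = F x (fun y _ => Fix Rwf P F y).
Proof.
  apply Fix_eq. intros x0 f g H.
  assert (f = g) as -> by (apply functional_extensionality_dep; intro y;
    apply functional_extensionality_dep; intro p; apply H).
  reflexivity.
Qed.

Lemma sig_eq {A} {P : A -> Prop} (x y : {a | P a}) : proj1_sig x = proj1_sig y -> x = y.
Proof. destruct x, y; simpl; intros ->. f_equal. apply proof_irrelevance. Qed.

Lemma infinite_two (A : Type) : infinite A -> exists a b : A, a <> b.
Proof. intros [f hf]. exists (f 0), (f 1). intro h. apply hf in h. discriminate. Qed.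

Lemma cof_no_max (D K : WO) : cof_is D K -> infinite K -> forall x : D, exists y, lt D x y.
Proof.
  intros [_ Hc] Hi x. apply NNPP; intro hn.
  assert (Hcof : cofinal D (fun y => y = x)).
  { intro z. exists x. split; auto. destruct (lt_total D z x) as [->|[h|h]]; auto.
    exfalso; apply hn; eauto. }
  destruct (Hc _ Hcof) as [f hf]. destruct Hi as [g hg].
  assert (f (g 0) = f (g 1)) by (apply sig_eq; destruct (f (g 0)), (f (g 1)); simpl; congruence).
  apply hf, hg in H. discriminate.
Qed.

Definition NoMax (D : WO) := forall x : D, exists y, lt D x y.

Definition succ (D : WO) (NM : NoMax D) (x : D) : D :=
  choose (wo_min D (fun y => lt D x y) (NM x)).

Lemma succ_lt D NM x : lt D x (succ D NM x).
Proof. unfold succ. exact (proj1 (choose_spec (wo_min D (fun y => lt D x y) (NM x)))). Qed.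

Lemma succ_least D NM x y : lt D x y -> le D (succ D NM x) y.
Proof. unfold succ. intro h. exact (proj2 (choose_spec (wo_min D (fun y => lt D x y) (NM x))) y h). Qed.

Lemma lt_succ_le D NM x y : lt D y (succ D NM x) -> le D y x.
Proof. intro h. apply not_lt_le. intro h'. apply succ_least with (NM := NM) in h'.
  exact (le_not_lt D _ _ h' h). Qed.

Lemma succ_mono D NM x y : le D x y -> le D (succ D NM x) (succ D NM y).
Proof. intros [->|h]. left; auto. apply succ_least. exact (lt_trans D _ _ _ h (succ_lt D NM y)). Qed.

Lemma succ_inj D NM x y : succ D NM x = succ D NM y -> x = y.
Proof.
  intro e. destruct (lt_total D x y) as [h|[h|h]]; auto; exfalso.
  - pose proof (succ_least D NM x y h). rewrite e in H. exact (le_not_lt D _ _ H (succ_lt D NM y)).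
  - pose proof (succ_least D NM y x h). rewrite <- e in H. exact (le_not_lt D _ _ H (succ_lt D NM x)).
Qed.

Definition haspred (D : WO) (NM : NoMax D) (z : D) := exists x, succ D NM x = z.

Lemma haspred_lt D NM z (h : haspred D NM z) : lt D (choose h) z.
Proof. pose proof (choose_spec h). simpl in H. rewrite <- H. apply succ_lt. Qed.

Definition dbl (D : WO) (NM : NoMax D) : D -> D :=
  Fix (lt_wf D) (fun _ => D) (fun z rec =>
    match excluded_middle_informative (haspred D NM z) with
    | left h => succ D NM (succ D NM (rec (choose h) (haspred_lt D NM z h)))
    | right _ => z end).

Definition par (D : WO) (NM : NoMax D) : D -> bool :=
  Fix (lt_wf D) (fun _ => bool) (fun z rec =>
    match excluded_middle_informative (haspred D NM z) with
    | left h => negb (rec (choose h) (haspred_lt D NM z h))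
    | right _ => false end).

Lemma choose_succ D NM x (h : haspred D NM (succ D NM x)) : choose h = x.
Proof. apply (succ_inj D NM). exact (choose_spec h). Qed.

Lemma dbl_succ D NM x : dbl D NM (succ D NM x) = succ D NM (succ D NM (dbl D NM x)).
Proof.
  unfold dbl at 1. rewrite Fix_eq'.
  destruct (excluded_middle_informative (haspred D NM (succ D NM x))) as [h|h].
  - rewrite choose_succ. reflexivity.
  - exfalso; apply h; exists x; auto.
Qed.

Lemma dbl_lim D NM z : ~ haspred D NM z -> dbl D NM z = z.
Proof. intro hz. unfold dbl; rewrite Fix_eq'.
  destruct (excluded_middle_informative (haspred D NM z)); tauto. Qed.

Lemma par_succ D NM x : par D NM (succ D NM x) = negb (par D NM x).
Proof.
  unfold par at 1. rewrite Fix_eq'.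
  destruct (excluded_middle_informative (haspred D NM (succ D NM x))) as [h|h].
  - rewrite choose_succ. reflexivity.
  - exfalso; apply h; exists x; auto.
Qed.

Lemma par_lim D NM z : ~ haspred D NM z -> par D NM z = false.
Proof. intro hz. unfold par; rewrite Fix_eq'.
  destruct (excluded_middle_informative (haspred D NM z)); tauto. Qed.

Lemma pred_cases D NM z : (exists x, z = succ D NM x) \/ ~ haspred D NM z.
Proof. destruct (classic (haspred D NM z)) as [[x h]|h]; [left; eauto|right; auto]. Qed.

Lemma par_dbl D NM z : par D NM (dbl D NM z) = false.
Proof.
  induction z as [z IH] using (well_founded_ind (lt_wf D)).
  destruct (pred_cases D NM z) as [[x ->]|h].
  - rewrite dbl_succ, !par_succ, IH by apply succ_lt. reflexivity.
  - rewrite dbl_lim, par_lim; auto.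
Qed.

Lemma dbl_inj D NM z z' : dbl D NM z = dbl D NM z' -> z = z'.
Proof.
  revert z'. induction z as [z IH] using (well_founded_ind (lt_wf D)). intros z' e.
  destruct (pred_cases D NM z) as [[x ->]|h]; destruct (pred_cases D NM z') as [[x' ->]|h'].
  - rewrite !dbl_succ in e. apply succ_inj, succ_inj in e. f_equal. apply IH; auto. apply succ_lt.
  - rewrite dbl_succ, (dbl_lim _ _ _ h') in e. exfalso; apply h'. eexists; exact e.
  - rewrite dbl_succ, (dbl_lim _ _ _ h) in e. exfalso; apply h. eexists; symmetry; exact e.
  - rewrite (dbl_lim _ _ _ h), (dbl_lim _ _ _ h') in e. auto.
Qed.

Definition IsLim (D : WO) (NM : NoMax D) (w : D) := forall y, lt D y w -> lt D (succ D NM y) w.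

Lemma dbl_lt D NM w : IsLim D NM w -> forall z, lt D z w -> lt D (dbl D NM z) w.
Proof.
  intros Hw z. induction z as [z IH] using (well_founded_ind (lt_wf D)). intro hz.
  destruct (pred_cases D NM z) as [[x ->]|h].
  - rewrite dbl_succ. apply Hw, Hw, IH. apply succ_lt. exact (lt_trans D _ _ _ (succ_lt D NM x) hz).
  - rewrite dbl_lim; auto.
Qed.

Definition seg (D : WO) (w : D) := {y : D | lt D y w}.

Lemma lim_double D NM w : IsLim D NM w -> card_le (seg D w + seg D w) (seg D w).
Proof.
  intro Hw.
  exists (fun s => match s with
     | inl y => exist _ (dbl D NM (proj1_sig y)) (dbl_lt D NM w Hw _ (proj2_sig y))
     | inr y => exist _ (succ D NM (dbl D NM (proj1_sig y))) (Hw _ (dbl_lt D NM w Hw _ (proj2_sig y))) end).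
  intros [a|a] [b|b] e; apply (f_equal (@proj1_sig _ _)) in e; simpl in e.
  - f_equal. apply sig_eq. apply (dbl_inj D NM). auto.
  - exfalso. apply (f_equal (par D NM)) in e. rewrite par_succ, !par_dbl in e. discriminate.
  - exfalso. apply (f_equal (par D NM)) in e. rewrite par_succ, !par_dbl in e. discriminate.
  - f_equal. apply sig_eq. apply (dbl_inj D NM). apply (succ_inj D NM). auto.
Qed.

Lemma hilbert W : card_le nat W -> card_le (W + nat) W.
Proof.
  intros [f hf].
  exists (fun s => match s with
    | inl y => match excluded_middle_informative (exists n, f n = y) with
               | left h => f (S (2 * choose h)) | right _ => y end
    | inr n => f (2 * n) end).
  intros [a|a] [b|b] e.
  - destruct (excluded_middle_informative (exists n, f n = a)) as [ha|ha];
    destruct (excluded_middle_informative (exists n, f n = b)) as [hb|hb].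
    + apply hf in e. assert (choose ha = choose hb) by lia.
      rewrite <- (choose_spec ha), <- (choose_spec hb), H. reflexivity.
    + exfalso; apply hb; eauto.
    + exfalso; apply ha; eauto.
    + congruence.
  - destruct (excluded_middle_informative (exists n, f n = a)) as [ha|ha].
    + apply hf in e. lia.
    + exfalso; apply ha; eauto.
  - destruct (excluded_middle_informative (exists n, f n = b)) as [hb|hb].
    + apply hf in e. lia.
    + exfalso; apply hb; eauto.
  - apply hf in e. f_equal. lia.
Qed.

Definition isl {P Q} (s : P + Q) : Prop := match s with inl _ => True | inr _ => False end.

Lemma pigeon P Q : card_le nat (P + Q) -> card_le nat P \/ card_le nat Q.
Proof.
  intros [g hg].
  destruct (classic (forall N, exists n, N <= n /\ isl (g n))) as [H|H].
  - left.
    assert (Hx : forall N, {n | N <= n /\ isl (g n)}) by (intro N; apply constructive_indefinite_description; auto).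
    set (h := fix h k := match k with O => proj1_sig (Hx 0) | S k' => proj1_sig (Hx (S (h k'))) end).
    assert (hinc : forall k, h k < h (S k)) by (intro k; simpl; destruct (proj2_sig (Hx (S (h k)))); lia).
    assert (hmono : forall k l, k < l -> h k < h l).
    { intros k l hl. induction hl. apply hinc. specialize (hinc m). lia. }
    assert (hl : forall k, isl (g (h k))).
    { intro k; destruct k; simpl; [exact (proj2 (proj2_sig (Hx 0)))|exact (proj2 (proj2_sig (Hx (S (h k)))))]. }
    assert (Hp : forall k, exists p, g (h k) = inl p).
    { intro k. specialize (hl k). destruct (g (h k)); [eauto|contradiction]. }
    exists (fun k => choose (Hp k)). intros k l e.
    assert (g (h k) = g (h l)) by (rewrite (choose_spec (Hp k)), (choose_spec (Hp l)), e; auto).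
    apply hg in H0. destruct (PeanoNat.Nat.lt_trichotomy k l) as [c|[c|c]]; auto; apply hmono in c; lia.
  - right. apply not_all_ex_not in H. destruct H as [N HN].
    assert (Hq : forall n, exists q, g (n + N) = inr q).
    { intro n. destruct (g (n + N)) eqn:E; eauto. exfalso. apply HN. exists (n + N). rewrite E. split; simpl; auto. lia. }
    exists (fun n => choose (Hq n)). intros a b e.
    assert (g (a + N) = g (b + N)) by (rewrite (choose_spec (Hq a)), (choose_spec (Hq b)), e; auto).
    apply hg in H. lia.
Qed.
Definition sit (D : WO) (NM : NoMax D) (w : D) (n : nat) : D := Nat.iter n (succ D NM) w.

Lemma sit_S D NM w n : sit D NM w (S n) = succ D NM (sit D NM w n).
Proof. reflexivity. Qed.

Lemma limit_above (D : WO) (NM : NoMax D) (w : D) :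
  (exists w', le D w w' /\ IsLim D NM w') \/ card_le D (seg D w + nat).
Proof.
  destruct (classic (exists u, forall n, lt D (sit D NM w n) u)) as [Hb|Hb].
  - left. destruct (wo_min D _ Hb) as [w' [H1 H2]]. exists w'. split.
    + right. exact (H1 0).
    + intros y hy. assert (~ forall n, lt D (sit D NM w n) y).
      { intro h. specialize (H2 y h). exact (le_not_lt D _ _ H2 hy). }
      apply not_all_ex_not in H. destruct H as [n hn]. apply not_lt_le in hn.
      apply (succ_mono D NM) in hn. exact (le_lt_trans D _ _ _ hn (H1 (S n))).
  - right.
    assert (Hu : forall u, exists n, le D u (sit D NM w n)).
    { intro u. apply NNPP; intro hn. apply Hb. exists u. intro n. apply NNPP; intro h.
      apply hn. exists n. apply not_lt_le. auto. }
    assert (Hz : forall z, le D w z -> exists m, z = sit D NM w m).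
    { intros z hz. destruct (Hu z) as [n hn]. revert hn. induction n as [|k IH]; intro hn.
      - exists 0. apply le_antisym; auto.
      - destruct (lt_or_le D (sit D NM w k) z) as [h|h].
        + exists (S k). apply le_antisym; auto. rewrite sit_S. apply succ_least; auto.
        + apply IH; auto. }
    exists (fun z => match excluded_middle_informative (lt D z w) with
            | left h => inl (exist _ z h)
            | right h => inr (choose (Hz z (not_lt_le D _ _ h))) end).
    intros a b e.
    destruct (excluded_middle_informative (lt D a w)) as [ha|ha];
    destruct (excluded_middle_informative (lt D b w)) as [hb|hb]; try discriminate.
    + inversion e; auto.
    + inversion e. rewrite (choose_spec (Hz a (not_lt_le D _ _ ha))), (choose_spec (Hz b (not_lt_le D _ _ hb))).
      rewrite H0. reflexivity.
Qed.

Lemma seg_incl (D : WO) (w : D) : card_le (seg D w) D.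
Proof. exists (@proj1_sig _ _). intros x y e. apply sig_eq; auto. Qed.

Lemma seg_mono (D : WO) (a b : D) : le D a b -> card_le (seg D a) (seg D b).
Proof. intro h. exists (fun (y : seg D a) => exist (fun z => lt D z b) (proj1_sig y) (lt_le_trans D _ _ _ (proj2_sig y) h)).
  intros x y e. apply (f_equal (@proj1_sig _ _)) in e. apply sig_eq; auto. Qed.

Lemma sum_le A B A' B' : card_le A A' -> card_le B B' -> card_le (A + B) (A' + B').
Proof. intros [f hf] [g hg]. exists (fun s => match s with inl a => inl (f a) | inr b => inr (g b) end).
  intros [a|a] [b|b] e; inversion e; f_equal; auto. Qed.

Lemma seg_not_big (D : WO) : is_cardinal D -> forall w, ~ card_le D (seg D w).
Proof. intros Hc w h. apply (Hc w). apply SB; auto. apply seg_incl. Qed.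

Lemma no_split (D : WO) (NM : NoMax D) : infinite D -> is_cardinal D ->
  forall w1 w2, ~ card_le D (seg D w1 + seg D w2).
Proof.
  intros Hi Hc w1 w2 H.
  set (w := if excluded_middle_informative (lt D w1 w2) then w2 else w1).
  assert (H1 : le D w1 w) by (unfold w; destruct (excluded_middle_informative (lt D w1 w2)); [right; auto|left; auto]).
  assert (H2 : le D w2 w) by (unfold w; destruct (excluded_middle_informative (lt D w1 w2)); [left; auto|apply not_lt_le; auto]).
  assert (H' : card_le D (seg D w + seg D w)) by
    (apply (card_le_trans _ _ _ H); apply sum_le; apply seg_mono; auto).
  clear H.
  destruct (classic (card_le nat (seg D w))) as [Hn|Hn].
  - destruct (limit_above D NM w) as [[w' [hw hl]]|Hs].
    + apply (seg_not_big D Hc w'). eapply card_le_trans; [exact H'|].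
      eapply card_le_trans; [apply sum_le; apply seg_mono; exact hw|]. apply (lim_double D NM); auto.
    + apply (seg_not_big D Hc w). eapply card_le_trans; [exact Hs|]. apply hilbert; auto.
  - exfalso. assert (card_le nat (seg D w + seg D w)) by (eapply card_le_trans; [exact Hi|exact H']).
    destruct (pigeon _ _ H); auto.
Qed.
Definition sgm (A D : WO) (c : D) : A -> D :=
  Fix (lt_wf A) (fun _ => D) (fun a rec =>
    match excluded_middle_informative
      (exists z, le D c z /\ forall a' (h : lt A a' a), lt D (rec a' h) z) with
    | left h => choose (wo_min D _ h)
    | right _ => c end).

Definition sgP (A D : WO) (c : D) (a : A) (z : D) :=
  le D c z /\ forall a', lt A a' a -> lt D (sgm A D c a') z.

Lemma sgm_spec (A D : WO) (c : D) (a : A) : (exists z, sgP A D c a z) ->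
  sgP A D c a (sgm A D c a) /\ forall z, sgP A D c a z -> le D (sgm A D c a) z.
Proof.
  intro G.
  assert (E : sgm A D c a = match excluded_middle_informative (exists z, sgP A D c a z) with
     | left h => choose (wo_min D _ h) | right _ => c end).
  { unfold sgm at 1. rewrite Fix_eq'. reflexivity. }
  rewrite E. destruct (excluded_middle_informative _) as [h|h].
  - exact (choose_spec (wo_min D _ h)).
  - exfalso. exact (h G).
Qed.

Lemma embed_or (A D : WO) (c : D) :
  (exists e : D, exists g : A -> D, injective g /\ forall a, le D c (g a) /\ lt D (g a) e)
  \/ card_le {z : D | le D c z} A.
Proof.
  set (s := sgm A D c). set (G := fun a => exists z, sgP A D c a z).
  assert (Key : forall z a, le D c z -> G a -> le D z (s a) ->
              (forall a', lt A a' a -> ~ le D z (s a')) -> s a = z).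
  { intros z a hz Ga h1 h2. apply le_antisym; auto. apply (proj2 (sgm_spec A D c a Ga)).
    split; auto. intros a' ha'. specialize (h2 a' ha'). destruct (lt_or_le D (s a') z); tauto. }
  assert (Right : (forall z, le D c z -> exists a, G a /\ le D z (s a) /\
                   forall a', lt A a' a -> ~ le D z (s a')) -> card_le {z : D | le D c z} A).
  { intro H. exists (fun zz => choose (H (proj1_sig zz) (proj2_sig zz))).
    intros [z hz] [z' hz'] e. simpl in e. apply sig_eq; simpl.
    pose proof (choose_spec (H z hz)) as [g1 [g2 g3]].
    pose proof (choose_spec (H z' hz')) as [g1' [g2' g3']].
    rewrite <- (Key z _ hz g1 g2 g3), <- (Key z' _ hz' g1' g2' g3'). rewrite e. reflexivity. }
  destruct (classic (forall a, G a)) as [HG|HG].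
  - assert (Hinc : forall a a', lt A a' a -> lt D (s a') (s a)).
    { intros a a' h. exact (proj2 (proj1 (sgm_spec A D c a (HG a))) a' h). }
    assert (Hc : forall a, le D c (s a)) by (intro a; exact (proj1 (proj1 (sgm_spec A D c a (HG a))))).
    destruct (classic (exists e, forall a, lt D (s a) e)) as [[e He]|Hu].
    + left. exists e, s. split.
      * intros x y h. destruct (lt_total A x y) as [?|[h'|h']]; auto; exfalso;
        apply Hinc in h'; rewrite h in h'; exact (lt_irrefl D _ h').
      * auto.
    + right. apply Right. intros z hz.
      assert (E : exists a, le D z (s a)).
      { apply NNPP; intro hn. apply Hu. exists z. intro a. apply NNPP; intro h.
        apply hn. exists a. apply not_lt_le; auto. }
      destruct (wo_min A _ E) as [a [ha1 ha2]]. exists a. split; auto. split; auto.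
      intros a' h' h''. specialize (ha2 a' h''). exact (le_not_lt A _ _ ha2 h').
  - right. apply Right. apply not_all_ex_not in HG.
    destruct (wo_min A (fun a => ~ G a) HG) as [a0 [h0 h0']].
    intros z hz.
    assert (E : exists a, lt A a a0 /\ le D z (s a)).
    { apply NNPP; intro hn. apply h0. exists z. split; auto. intros a' ha'.
      destruct (lt_or_le D (s a') z) as [?|h]; auto. exfalso; apply hn; eauto. }
    destruct (wo_min A _ E) as [a [[ha1 ha1'] ha2]]. exists a. split; [|split; auto].
    + apply NNPP; intro hg. specialize (h0' a hg). exact (le_not_lt A _ _ h0' ha1).
    + intros a' h' h''. assert (lt A a' a0) by (exact (lt_trans A _ _ _ h' ha1)).
      specialize (ha2 a' (conj H h'')). exact (le_not_lt A _ _ ha2 h').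
Qed.
Definition segWO (D : WO) (a : D) : WO.
Proof.
  refine {| car := seg D a; lt := fun x y => lt D (proj1_sig x) (proj1_sig y) |}.
  - intro x. apply lt_irrefl.
  - intros x y z. apply lt_trans.
  - intros x y. destruct (lt_total D (proj1_sig x) (proj1_sig y)) as [h|[h|h]]; auto.
    left. apply sig_eq; auto.
  - apply (Inverse_Image.wf_inverse_image _ _ (lt D) (fun x : seg D a => proj1_sig x)). apply lt_wf.
Defined.

Lemma room (D : WO) (NM : NoMax D) : infinite D -> is_cardinal D ->
  forall a c : D, exists e : D, exists g : seg D a -> D,
    injective g /\ forall y, le D c (g y) /\ lt D (g y) e.
Proof.
  intros Hi Hc a c. destruct (embed_or (segWO D a) D c) as [H|[f hf]]; [exact H|].
  exfalso. apply (no_split D NM Hi Hc c a).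
  exists (fun z => match excluded_middle_informative (lt D z c) with
    | left h => inl (exist _ z h)
    | right h => inr (f (exist _ z (not_lt_le D _ _ h))) end).
  intros x y e.
  destruct (excluded_middle_informative (lt D x c)) as [hx|hx];
  destruct (excluded_middle_informative (lt D y c)) as [hy|hy]; inversion e; auto.
  apply hf in H0. inversion H0; auto.
Qed.

Lemma wo_least (D : WO) (d : D) : exists m : D, forall z, le D m z.
Proof. destruct (wo_min D (fun _ => True) (ex_intro _ d I)) as [m [_ h]]. exists m. auto. Qed.

Lemma bounded_copy (D K : WO) : cof_is D K -> infinite D ->
  (exists S : D -> Prop, cofinal D S /\ ~ card_le D {y : D | S y}) ->
  exists a : D, card_le K (seg D a).
Proof.
  intros [_ Hcof] [d _] [S [HS HnS]].
  destruct (wo_least D (d 0)) as [m Hm].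
  destruct (embed_or K D m) as [[e [g [hg hg']]]|[f hf]].
  - exists e. exists (fun k => exist (fun z => lt D z e) (g k) (proj2 (hg' k))).
    intros x y h. apply hg. apply (f_equal (@proj1_sig _ _)) in h. exact h.
  - exfalso. apply HnS. eapply card_le_trans; [|apply (Hcof S HS)].
    exists (fun z => f (exist _ z (Hm z))). intros x y h. apply hf in h. inversion h; auto.
Qed.

Lemma small_bounded (D K : WO) : cof_is D K -> is_cardinal K ->
  forall (xi : K) (T : K -> D), exists z, forall eta, lt K eta xi -> lt D (T eta) z.
Proof.
  intros [_ Hcof] HK xi T. apply NNPP; intro hn.
  set (S := fun z => exists eta, lt K eta xi /\ T eta = z).
  assert (HS : cofinal D S).
  { intro x. assert (~ forall eta, lt K eta xi -> lt D (T eta) x) by (intro h; apply hn; eauto).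
    apply not_all_ex_not in H. destruct H as [eta h]. apply imply_to_and in h. destruct h as [h1 h2].
    exists (T eta). split; [exists eta; auto|]. apply not_lt_le in h2. exact h2. }
  apply (seg_not_big K HK xi). eapply card_le_trans; [exact (Hcof S HS)|].
  assert (Hc : forall zz : {z | S z}, exists eta, lt K eta xi /\ T eta = proj1_sig zz)
    by (intros [z hz]; exact hz).
  exists (fun zz => exist (fun eta => lt K eta xi) (choose (Hc zz)) (proj1 (choose_spec (Hc zz)))).
  intros x y h. apply (f_equal (@proj1_sig _ _)) in h. simpl in h. apply sig_eq.
  rewrite <- (proj2 (choose_spec (Hc x))), <- (proj2 (choose_spec (Hc y))), h. reflexivity.
Qed.
Definition cyl (D : WO) (R : Type) (f : D -> R) (a : D) : (D -> R) -> Prop :=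
  fun g => forall b, lt D b a -> g b = f b.
Definition Bcan (D : WO) (R : Type) (U : (D -> R) -> Prop) := exists a f, U = cyl D R f a.
Definition Node (D : WO) (R : Type) := {U : (D -> R) -> Prop | Bcan D R U}.

Lemma cyl_ext (D : WO) (R : Type) (f g : D -> R) (a : D) :
  (forall b, lt D b a -> f b = g b) -> cyl D R f a = cyl D R g a.
Proof.
  intro h. apply functional_extensionality; intro x. apply propositional_extensionality.
  unfold cyl; split; intros H b hb; rewrite H by auto; [|symmetry]; auto.
Qed.

Lemma cyl_self (D : WO) (R : Type) (f : D -> R) (a : D) : cyl D R f a f.
Proof. intros b _; reflexivity. Qed.

Lemma cyl_open (D : WO) (R : Type) (f : D -> R) (a : D) : @bd_open D R (cyl D R f a).
Proof. intros g hg. exists a. intros h hh b hb. rewrite hh by auto. auto. Qed.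

Lemma Bcan_base (D : WO) (R : Type) : is_base (@bd_open D R) (Bcan D R).
Proof.
  split.
  - intros U [a [f ->]]. apply cyl_open.
  - intros V hV x hx. destruct (hV x hx) as [a ha]. exists (cyl D R x a). split; [exists a, x; auto|].
    split; [apply cyl_self|]. intros y hy. apply ha. exact hy.
Qed.

Lemma Bcan_least (D : WO) (R : Type) (NM : NoMax D) (r0 r1 : R) : r0 <> r1 ->
  forall B, is_base (@bd_open D R) B -> card_le (Node D R) {U | B U}.
Proof.
  intros r01 B [HB1 HB2].
  assert (Hrep : forall U : Node D R, exists af : D * (D -> R), proj1_sig U = cyl D R (snd af) (fst af)).
  { intros [U [a [f e]]]. exists (a, f). auto. }
  set (xU := fun U : Node D R => let af := choose (Hrep U) in
     fun b => if excluded_middle_informative (lt D b (fst af)) then snd af b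
              else if excluded_middle_informative (b = fst af) then r1 else r0).
  set (WU := fun U => cyl D R (xU U) (succ D NM (fst (choose (Hrep U))))).
  assert (HV : forall U, exists V, B V /\ V (xU U) /\ forall y, V y -> WU U y).
  { intro U. apply HB2. apply cyl_open. apply cyl_self. }
  exists (fun U => exist _ (choose (HV U)) (proj1 (choose_spec (HV U)))).
  intros U1 U2 e. apply (f_equal (@proj1_sig _ _)) in e. simpl in e.
  pose proof (choose_spec (HV U1)) as [_ [h1 h1']]. pose proof (choose_spec (HV U2)) as [_ [h2 h2']].
  rewrite e in h1, h1'.
  apply h2' in h1. apply h1' in h2. unfold WU in h1, h2.
  pose proof (choose_spec (Hrep U1)) as E1. pose proof (choose_spec (Hrep U2)) as E2.
  destruct (choose (Hrep U1)) as [a1 f1] eqn:Q1. destruct (choose (Hrep U2)) as [a2 f2] eqn:Q2.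
  simpl in *. unfold xU in h1, h2. rewrite Q1, Q2 in h1, h2. simpl in h1, h2.
  destruct (lt_total D a1 a2) as [<-|[h|h]].
  - apply sig_eq. rewrite E1, E2. apply cyl_ext. intros b hb.
    specialize (h1 b (lt_trans D _ _ _ hb (succ_lt D NM a1))). cbv beta in h1.
    destruct (excluded_middle_informative (lt D b a1)); [|contradiction]. auto.
  - exfalso. specialize (h1 a2 (succ_lt D NM a2)). cbv beta in h1.
    destruct (excluded_middle_informative (lt D a2 a1)) as [c|c]; [exact (lt_asym D _ _ h c)|].
    destruct (excluded_middle_informative (a2 = a1)) as [c'|c']; [subst; exact (lt_irrefl D _ h)|].
    destruct (excluded_middle_informative (lt D a2 a2)) as [c2|c2]; [exact (lt_irrefl D _ c2)|].
    destruct (excluded_middle_informative (a2 = a2)) as [_|c3]; [|apply c3; auto]. auto.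
  - exfalso. specialize (h2 a1 (succ_lt D NM a1)). cbv beta in h2.
    destruct (excluded_middle_informative (lt D a1 a2)) as [c|c]; [exact (lt_asym D _ _ h c)|].
    destruct (excluded_middle_informative (a1 = a2)) as [c'|c']; [subst; exact (lt_irrefl D _ h)|].
    destruct (excluded_middle_informative (lt D a1 a1)) as [c2|c2]; [exact (lt_irrefl D _ c2)|].
    destruct (excluded_middle_informative (a1 = a1)) as [_|c3]; [|apply c3; auto]. auto.
Qed.

Lemma weight_can (D : WO) (R : Type) (NM : NoMax D) (r0 r1 : R) : r0 <> r1 ->
  weight_is (@bd_open D R) (Node D R).
Proof.
  intro r01. split.
  - exists (Bcan D R). split; [apply Bcan_base|]. exists (fun x => x), (fun x => x); auto.
  - apply (Bcan_least D R NM r0 r1 r01).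
Qed.

Lemma homeo_sym (X Y : Type) (oX : (X -> Prop) -> Prop) (oY : (Y -> Prop) -> Prop) :
  homeomorphic oX oY -> homeomorphic oY oX.
Proof. intros [h [h' [H1 [H2 [H3 H4]]]]]. exists h', h. auto. Qed.

Lemma homeo_trans (X Y Z : Type) (oX : (X -> Prop) -> Prop) (oY : (Y -> Prop) -> Prop) (oZ : (Z -> Prop) -> Prop) :
  homeomorphic oX oY -> homeomorphic oY oZ -> homeomorphic oX oZ.
Proof.
  intros [h [h' [H1 [H2 [H3 H4]]]]] [k [k' [K1 [K2 [K3 K4]]]]].
  exists (fun x => k (h x)), (fun z => h' (k' z)). split; [|split; [|split]].
  - intro x. rewrite K1, H1. auto.
  - intro z. rewrite H2, K2. auto.
  - intros V hV. apply (H3 (fun y => V (k y))). apply K3; auto.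
  - intros U hU. apply (K4 (fun y => U (h' y))). apply H4; auto.
Qed.

Lemma homeo_cod (K : WO) (N N' : Type) : card_eq N N' -> homeomorphic (@bd_open K N) (@bd_open K N').
Proof.
  intros [f [g [h1 h2]]].
  exists (fun y k => f (y k)), (fun y k => g (y k)). split; [|split; [|split]].
  - intro y. apply functional_extensionality; intro k. auto.
  - intro y. apply functional_extensionality; intro k. auto.
  - intros V hV y hy. destruct (hV _ hy) as [a ha]. exists a. intros y' hy'. apply ha.
    intros b hb. rewrite hy'; auto.
  - intros V hV y hy. destruct (hV _ hy) as [a ha]. exists a. intros y' hy'. apply ha.
    intros b hb. rewrite hy'; auto.
Qed.

Lemma base_transfer (X Y : Type) (oX : (X -> Prop) -> Prop) (oY : (Y -> Prop) -> Prop) :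
  homeomorphic oX oY -> forall B, is_base oX B ->
  exists B', is_base oY B' /\ card_eq {U | B U} {V | B' V}.
Proof.
  intros [h [h' [H1 [H2 [H3 H4]]]]] B [HB1 HB2].
  exists (fun V => B (fun x => V (h x))). split.
  - split.
    + intros V hV. apply HB1 in hV. apply H4 in hV.
      replace V with (fun y => V (h (h' y))); auto. apply functional_extensionality; intro y. rewrite H2; auto.
    + intros W hW y hy. apply H3 in hW. destruct (HB2 _ hW (h' y)) as [U [hU [hU1 hU2]]].
      { rewrite H2; auto. }
      exists (fun z => U (h' z)). split; [|split; auto].
      * replace (fun x => U (h' (h x))) with U; auto. apply functional_extensionality; intro x. rewrite H1; auto.
      * intros z hz. apply hU2 in hz. rewrite H2 in hz; auto.
  - assert (E1 : forall U : {U | B U}, B (fun x => (fun y => proj1_sig U (h' y)) (h x))).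
    { intros [U hU]. simpl. replace (fun x => U (h' (h x))) with U; auto.
      apply functional_extensionality; intro x. rewrite H1; auto. }
    exists (fun U => exist (fun V => B (fun x => V (h x))) _ (E1 U)),
           (fun (V : {V : Y -> Prop | B (fun x => V (h x))}) => exist (fun U => B U) (fun x => proj1_sig V (h x)) (proj2_sig V)).
    split.
    + intros [U hU]. apply sig_eq. simpl. apply functional_extensionality; intro x. rewrite H1; auto.
    + intros [V hV]. apply sig_eq. simpl. apply functional_extensionality; intro x. rewrite H2; auto.
Qed.

Lemma weight_transfer (X Y : Type) (oX : (X -> Prop) -> Prop) (oY : (Y -> Prop) -> Prop) (L : Type) :
  homeomorphic oX oY -> weight_is oX L -> weight_is oY L.
Proof.
  intros Hh [[B0 [hB0 eB0]] Hmin]. split.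
  - destruct (base_transfer X Y oX oY Hh B0 hB0) as [B' [hB' e']]. exists B'. split; auto.
    eapply card_eq_trans; [apply card_eq_sym; exact e'|exact eB0].
  - intros C hC. destruct (base_transfer Y X oY oX (homeo_sym _ _ _ _ Hh) C hC) as [C' [hC' e']].
    eapply card_le_trans; [apply (Hmin C' hC')|]. apply card_eq_le. apply card_eq_sym; auto.
Qed.

Lemma weight_unique (X : Type) (oX : (X -> Prop) -> Prop) (L L0 : Type) :
  weight_is oX L -> weight_is oX L0 -> card_eq L L0.
Proof.
  intros [[B [hB eB]] HL] [[B' [hB' eB']] HL'].
  apply SB.
  - eapply card_le_trans; [apply (HL B' hB')|]. apply card_eq_le; auto.
  - eapply card_le_trans; [apply (HL' B hB)|]. apply card_eq_le; auto.
Qed.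
Record Setting := mkS {
  sD : WO; sK : WO; sR : Type; r0 : sR; r1 : sR; r01 : r0 <> r1;
  sNM : NoMax sD; sInf : infinite sD; sCard : is_cardinal sD;
  sNMK : NoMax sK; sk0 : sK;
  sBnd : forall (xi : sK) (T : sK -> sD), exists z, forall eta, lt sK eta xi -> lt sD (T eta) z;
  se : sK -> sD; se_cof : forall x, exists k, le sD x (se k);
  sBlock : card_le sK sR \/ exists a, card_le sK (seg sD a) }.

Definition agree (S : Setting) (x f : sD S -> sR S) (p : sD S) := forall b, lt (sD S) b p -> x b = f b.

Lemma block (S : Setting) (q0 : sD S) : exists q1, lt (sD S) q0 q1 /\
  exists iota : sK S -> sD S -> sR S, forall z z',
    (forall b, le (sD S) q0 b -> lt (sD S) b q1 -> iota z b = iota z' b) -> z = z'.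
Proof.
  destruct (sBlock S) as [[k hk]|[a [k hk]]].
  - exists (succ _ (sNM S) q0). split; [apply succ_lt|].
    exists (fun z _ => k z). intros z z' h. apply hk. apply (h q0); [apply le_refl|apply succ_lt].
  - destruct (room (sD S) (sNM S) (sInf S) (sCard S) a q0) as [e [j [hj hj']]].
    exists e. split.
    + destruct (hj' (k (sk0 S))) as [h1 h2]. exact (le_lt_trans _ _ _ _ h1 h2).
    + exists (fun z b => if excluded_middle_informative (b = j (k z)) then r1 S else r0 S).
      intros z z' h. specialize (h (j (k z)) (proj1 (hj' _)) (proj2 (hj' _))). simpl in h.
      destruct (excluded_middle_informative (j (k z) = j (k z))) as [_|c]; [|tauto].
      destruct (excluded_middle_informative (j (k z) = j (k z'))) as [c|c].
      * apply hk, hj. exact c.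
      * exfalso. exact (r01 S (eq_sym h)).
Qed.

Lemma deep (S : Setting) (q1 a : sD S) : (exists y, lt (sD S) y a) ->
  exists tr : (sD S * (sD S -> sD S)) * (sD S -> sD S),
    let L := fst (fst tr) in let j1 := snd (fst tr) in let j2 := snd tr in
    (forall y y', lt _ y a -> lt _ y' a -> j1 y = j1 y' -> y = y') /\
    (forall y y', lt _ y a -> lt _ y' a -> j2 y = j2 y' -> y = y') /\
    (forall y, lt _ y a -> le _ q1 (j1 y)) /\
    (forall y y', lt _ y a -> lt _ y' a -> lt _ (j1 y) (j2 y')) /\
    (forall y, lt _ y a -> lt _ (j2 y) L) /\ lt _ q1 L.
Proof.
  intros [y0 hy0].
  destruct (room (sD S) (sNM S) (sInf S) (sCard S) a q1) as [m1 [j1 [hj1 hj1']]].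
  destruct (room (sD S) (sNM S) (sInf S) (sCard S) a m1) as [L [j2 [hj2 hj2']]].
  set (J1 := fun y => match excluded_middle_informative (lt _ y a) with
                      | left h => j1 (exist _ y h) | right _ => y end).
  set (J2 := fun y => match excluded_middle_informative (lt _ y a) with
                      | left h => j2 (exist _ y h) | right _ => y end).
  assert (EJ1 : forall y (h : lt _ y a), J1 y = j1 (exist _ y h)).
  { intros y h. unfold J1. destruct (excluded_middle_informative _) as [h'|h']; [|tauto].
    f_equal. apply sig_eq; auto. }
  assert (EJ2 : forall y (h : lt _ y a), J2 y = j2 (exist _ y h)).
  { intros y h. unfold J2. destruct (excluded_middle_informative _) as [h'|h']; [|tauto].
    f_equal. apply sig_eq; auto. }
  exists ((L, J1), J2). simpl. split; [|split; [|split; [|split; [|split]]]].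
  - intros y y' h h' e. rewrite (EJ1 y h), (EJ1 y' h') in e. apply hj1 in e. inversion e; auto.
  - intros y y' h h' e. rewrite (EJ2 y h), (EJ2 y' h') in e. apply hj2 in e. inversion e; auto.
  - intros y h. rewrite (EJ1 y h). apply hj1'.
  - intros y y' h h'. rewrite (EJ1 y h), (EJ2 y' h').
    exact (lt_le_trans _ _ _ _ (proj2 (hj1' _)) (proj1 (hj2' _))).
  - intros y h. rewrite (EJ2 y h). apply hj2'.
  - set (Y := exist (fun z => lt _ z a) y0 hy0).
    apply (le_lt_trans _ _ (j1 Y)); [apply hj1'|].
    apply (lt_le_trans _ _ m1); [apply hj1'|].
    apply lt_le_weak. exact (le_lt_trans _ _ _ _ (proj1 (hj2' Y)) (proj2 (hj2' Y))).
Qed.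
Definition xenc (S : Setting) (p q0 q1 : sD S) (f : sD S -> sR S) (iz : sD S -> sR S) (bz : sD S)
  (j1 j2 : sD S -> sD S) (a : sD S) (g : sD S -> sR S) : sD S -> sR S :=
 fun b => if excluded_middle_informative (lt _ b p) then f b
  else if excluded_middle_informative (le _ q0 b /\ lt _ b q1) then iz b
  else match excluded_middle_informative (exists y, lt _ y bz /\ j1 y = b) with
   | left h => if excluded_middle_informative (lt _ (choose h) a) then g (choose h) else r0 S
   | right _ => match excluded_middle_informative (exists y, lt _ y bz /\ j2 y = b) with
       | left h => if excluded_middle_informative (choose h = a) then r1 S else r0 S
       | right _ => r0 S end end.


Lemma xenc_E0 S p q0 q1 f iz bz j1 j2 a g b : lt _ b p -> xenc S p q0 q1 f iz bz j1 j2 a g b = f b.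
Proof. intro h. unfold xenc. destruct (excluded_middle_informative (lt _ b p)); tauto. Qed.

Lemma xenc_E1 S p q0 q1 f iz bz j1 j2 a g b : lt _ p q0 -> le _ q0 b -> lt _ b q1 ->
  xenc S p q0 q1 f iz bz j1 j2 a g b = iz b.
Proof.
  intros h0 h1 h2. unfold xenc. destruct (excluded_middle_informative (lt _ b p)) as [c|c].
  - exfalso. exact (le_not_lt _ _ _ h1 (lt_trans _ _ _ _ c h0)).
  - destruct (excluded_middle_informative _) as [_|c']; [auto|tauto].
Qed.

Lemma xenc_E2 S p q0 q1 f iz bz j1 j2 a g y : lt _ p q0 -> lt _ q0 q1 ->
  (forall y y', lt _ y bz -> lt _ y' bz -> j1 y = j1 y' -> y = y') ->
  (forall y, lt _ y bz -> le _ q1 (j1 y)) -> lt _ y bz ->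
  xenc S p q0 q1 f iz bz j1 j2 a g (j1 y) = if excluded_middle_informative (lt _ y a) then g y else r0 S.
Proof.
  intros h0 h01 hinj hpos hy. unfold xenc.
  assert (hq : le _ q1 (j1 y)) by auto.
  destruct (excluded_middle_informative (lt _ (j1 y) p)) as [c|c].
  { exfalso. apply (le_not_lt _ _ _ hq). exact (lt_trans _ _ _ _ c (lt_trans _ _ _ _ h0 h01)). }
  destruct (excluded_middle_informative _) as [[_ c']|_].
  { exfalso. exact (le_not_lt _ _ _ hq c'). }
  destruct (excluded_middle_informative _) as [h|h].
  - assert (E : choose h = y) by (destruct (choose_spec h); apply hinj; auto).
    rewrite E. reflexivity.
  - exfalso. apply h. exists y; auto.
Qed.

Lemma xenc_E3 S p q0 q1 f iz bz j1 j2 a g y : lt _ p q0 -> lt _ q0 q1 ->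
  (forall y y', lt _ y bz -> lt _ y' bz -> j2 y = j2 y' -> y = y') ->
  (forall y, lt _ y bz -> le _ q1 (j1 y)) ->
  (forall y y', lt _ y bz -> lt _ y' bz -> lt _ (j1 y) (j2 y')) -> lt _ y bz ->
  xenc S p q0 q1 f iz bz j1 j2 a g (j2 y) = if excluded_middle_informative (y = a) then r1 S else r0 S.
Proof.
  intros h0 h01 hinj hpos hord hy. unfold xenc.
  assert (hq : lt _ q1 (j2 y)) by (exact (le_lt_trans _ _ _ _ (hpos y hy) (hord y y hy hy))).
  destruct (excluded_middle_informative (lt _ (j2 y) p)) as [c|c].
  { exfalso. apply (lt_asym _ _ _ hq). exact (lt_trans _ _ _ _ c (lt_trans _ _ _ _ h0 h01)). }
  destruct (excluded_middle_informative _) as [[_ c']|_].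
  { exfalso. exact (lt_asym _ _ _ hq c'). }
  destruct (excluded_middle_informative _) as [h|h].
  - exfalso. destruct h as [y' [hy' e]]. specialize (hord y' y hy' hy). rewrite e in hord.
    exact (lt_irrefl _ _ hord).
  - destruct (excluded_middle_informative _) as [h'|h'].
    + assert (E : choose h' = y) by (destruct (choose_spec h'); apply hinj; auto).
      rewrite E. reflexivity.
    + exfalso. apply h'. exists y; auto.
Qed.
Lemma choice_fun {A B : Type} (P : A -> B -> Prop) : (forall x, exists y, P x y) -> exists f, forall x, P x (f x).
Proof. intro h. exists (fun x => choose (h x)). intro x. exact (choose_spec (h x)). Qed.

Lemma cyl_agree (D : WO) (R : Type) (x x' : D -> R) (L L' : D) :
  cyl D R x L = cyl D R x' L' -> forall b, lt D b L' -> x b = x' b.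
Proof. intros e b hb. assert (H : cyl D R x L x) by apply cyl_self. rewrite e in H. apply H; auto. Qed.

Lemma deep_fun (S : Setting) (q1 : sD S) : exists (L : sK S -> sD S) (J1 J2 : sK S -> sD S -> sD S),
  forall z, let a := succ _ (sNM S) (se S z) in
    (forall y y', lt _ y a -> lt _ y' a -> J1 z y = J1 z y' -> y = y') /\
    (forall y y', lt _ y a -> lt _ y' a -> J2 z y = J2 z y' -> y = y') /\
    (forall y, lt _ y a -> le _ q1 (J1 z y)) /\
    (forall y y', lt _ y a -> lt _ y' a -> lt _ (J1 z y) (J2 z y')) /\
    (forall y, lt _ y a -> lt _ (J2 z y) (L z)) /\ lt _ q1 (L z).
Proof.
  assert (H : forall z, exists tr, _) by (intro z; exact (deep S q1 (succ _ (sNM S) (se S z)) (ex_intro _ (se S z) (succ_lt _ _ _)))).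
  destruct (choice_fun _ H) as [tr htr].
  exists (fun z => fst (fst (tr z))), (fun z => snd (fst (tr z))), (fun z => snd (tr z)).
  intro z. exact (htr z).
Qed.

Lemma node_rep (D : WO) (R : Type) : exists (aU : Node D R -> D) (gU : Node D R -> D -> R),
  forall U, proj1_sig U = cyl D R (gU U) (aU U).
Proof.
  assert (H : forall U : Node D R, exists ag : D * (D -> R), proj1_sig U = cyl D R (snd ag) (fst ag)).
  { intros [U [a [f e]]]. exists (a, f). auto. }
  destruct (choice_fun _ H) as [r hr]. exists (fun U => fst (r U)), (fun U => snd (r U)). auto.
Qed.

Definition ACprop (S : Setting) (p : sD S) (f : sD S -> sR S) (t : sD S)
  (A : ((sD S -> sR S) -> Prop) -> Prop) : Prop :=
  (forall U, A U -> exists qh : sD S * (sD S -> sR S), U = cyl _ _ (snd qh) (fst qh) /\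
       lt _ p (fst qh) /\ lt _ t (fst qh) /\ agree S (snd qh) f p) /\
  (forall x, agree S x f p -> exists U, A U /\ U x) /\
  (forall x U U', A U -> A U' -> U x -> U' x -> U = U') /\
  card_le (Node (sD S) (sR S)) {U | A U}.

Lemma AC (S : Setting) (p : sD S) (f : sD S -> sR S) (t : sD S) : exists A, ACprop S p f t A.
Proof.
  set (mx := if excluded_middle_informative (lt _ p t) then t else p).
  assert (hp : le _ p mx) by (unfold mx; destruct (excluded_middle_informative _); [right|left]; auto).
  assert (ht : le _ t mx) by (unfold mx; destruct (excluded_middle_informative _); [left; auto|apply not_lt_le; auto]).
  set (q0 := succ _ (sNM S) mx).
  assert (hq0p : lt _ p q0) by (exact (le_lt_trans _ _ _ _ hp (succ_lt _ _ _))).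
  assert (hq0t : lt _ t q0) by (exact (le_lt_trans _ _ _ _ ht (succ_lt _ _ _))).
  destruct (block S q0) as [q1 [hq01 [iota hiota]]].
  destruct (deep_fun S q1) as [L [J1 [J2 HL]]].
  assert (Hlt : forall z, lt _ q1 (L z)) by (intro z; destruct (HL z) as [_ [_ [_ [_ [_ H6]]]]]; exact H6).
  set (blockeq := fun x y : sD S -> sR S => forall b, le _ q0 b -> lt _ b q1 -> x b = y b).
  exists (fun U => (exists x, agree S x f p /\ (forall z, ~ blockeq x (iota z)) /\ U = cyl _ _ x q1) \/
                   (exists x z, agree S x f p /\ blockeq x (iota z) /\ U = cyl _ _ x (L z))).
  split; [|split; [|split]].
  - intros U [[x [h1 [h2 ->]]]|[x [z [h1 [h2 ->]]]]].
    + exists (q1, x). simpl. repeat split; auto.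
      exact (lt_trans _ _ _ _ hq0p hq01). exact (lt_trans _ _ _ _ hq0t hq01).
    + exists (L z, x). simpl. destruct (HL z) as [_ [_ [_ [_ [_ H6]]]]]. repeat split; auto.
      exact (lt_trans _ _ _ _ (lt_trans _ _ _ _ hq0p hq01) H6).
      exact (lt_trans _ _ _ _ (lt_trans _ _ _ _ hq0t hq01) H6).
  - intros x hx. destruct (classic (exists z, blockeq x (iota z))) as [[z hz]|hz].
    + exists (cyl _ _ x (L z)). split; [right; exists x, z; auto|apply cyl_self].
    + exists (cyl _ _ x q1). split; [left; exists x; split; auto|apply cyl_self].
      split; auto. intros z h. apply hz; eauto.
  - intros x U U' [[x1 [a1 [b1 ->]]]|[x1 [z1 [a1 [b1 ->]]]]] [[x2 [a2 [b2 ->]]]|[x2 [z2 [a2 [b2 ->]]]]] hU hU'.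
    + apply functional_extensionality; intro w. apply propositional_extensionality.
      unfold cyl in *. split; intros H b hb; rewrite H by auto; rewrite <- (hU b hb), <- (hU' b hb); reflexivity.
    + exfalso. apply (b1 z2). intros b hb1 hb2. rewrite <- hU by auto. rewrite hU' by (exact (lt_trans _ _ _ _ hb2 (Hlt z2))).
      apply b2; auto.
    + exfalso. apply (b2 z1). intros b hb1 hb2. rewrite <- hU' by auto. rewrite hU by (exact (lt_trans _ _ _ _ hb2 (Hlt z1))).
      apply b1; auto.
    + assert (Ez : z1 = z2).
      { apply hiota. intros b hb1 hb2. rewrite <- b1, <- b2 by auto.
        rewrite <- hU by (exact (lt_trans _ _ _ _ hb2 (Hlt z1))).
        rewrite <- hU' by (exact (lt_trans _ _ _ _ hb2 (Hlt z2))). auto. }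
      subst z2. apply functional_extensionality; intro w. apply propositional_extensionality.
      unfold cyl in *. split; intros H b hb; rewrite H by auto; rewrite <- (hU b hb), <- (hU' b hb); reflexivity.
  - destruct (node_rep (sD S) (sR S)) as [aU [gU hUrep]].
    destruct (choice_fun _ (se_cof S)) as [zA hzA].
    set (bdz := fun z => succ _ (sNM S) (se S z)).
    set (xU := fun U => let z := zA (aU U) in
                 xenc S p q0 q1 f (iota z) (bdz z) (J1 z) (J2 z) (aU U) (gU U)).
    assert (HA : forall U, lt _ (aU U) (bdz (zA (aU U)))).
    { intro U. exact (le_lt_trans _ _ _ _ (hzA (aU U)) (succ_lt _ _ _)). }
    assert (Hmem : forall U, (exists x z, agree S x f p /\ blockeq x (iota z) /\
                      cyl _ _ (xU U) (L (zA (aU U))) = cyl _ _ x (L z))).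
    { intro U. exists (xU U), (zA (aU U)). split; [|split; auto].
      - intros b hb. unfold xU. apply xenc_E0; auto.
      - intros b hb1 hb2. unfold xU. apply xenc_E1; auto. }
    exists (fun U => exist _ (cyl _ _ (xU U) (L (zA (aU U)))) (or_intror (Hmem U))).
    intros U1 U2 e. apply (f_equal (@proj1_sig _ _)) in e. simpl in e.
    assert (Ez : zA (aU U1) = zA (aU U2)).
    { apply hiota. intros b hb1 hb2.
      pose proof (cyl_agree _ _ _ _ _ _ e b (lt_trans _ _ _ _ hb2 (Hlt _))) as E.
      unfold xU in E. rewrite !xenc_E1 in E; auto. }
    unfold xU in e. rewrite <- Ez in e. set (z := zA (aU U1)) in *.
    destruct (HL z) as [H1 [H2 [H3 [H4 [H5 H6]]]]]. fold (bdz z) in H1, H2, H3, H4, H5.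
    assert (HA2 : lt _ (aU U2) (bdz z)) by (rewrite Ez; apply HA).
    assert (Ea : aU U1 = aU U2).
    { pose proof (cyl_agree _ _ _ _ _ _ e (J2 z (aU U1)) (H5 _ (HA U1))) as E.
      rewrite !xenc_E3 in E; auto; try apply HA.
      destruct (excluded_middle_informative (aU U1 = aU U1)) as [_|c]; [|tauto].
      destruct (excluded_middle_informative (aU U1 = aU U2)) as [c|c]; auto.
      exfalso; exact (r01 S (eq_sym E)). }
    apply sig_eq. rewrite hUrep, hUrep. rewrite <- Ea. apply cyl_ext. intros b hb.
    assert (hbz : lt _ b (bdz z)) by (exact (lt_trans _ _ _ _ hb (HA U1))).
    pose proof (cyl_agree _ _ _ _ _ _ e (J1 z b) (lt_trans _ _ _ _ (H4 b b hbz hbz) (H5 b hbz))) as E.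
    rewrite !xenc_E2 in E; auto.
    rewrite <- Ea in E.
    destruct (excluded_middle_informative (lt _ b (aU U1))); [auto|tauto].
Qed.
Definition Stp (S : Setting) := sD S -> (sD S -> sR S) -> sD S -> Node (sD S) (sR S) -> sD S * (sD S -> sR S).

Definition StepProp (S : Setting) (step : Stp S) : Prop :=
  forall p f t,
  (forall u, lt _ p (fst (step p f t u)) /\ lt _ t (fst (step p f t u)) /\ agree S (snd (step p f t u)) f p) /\
  (forall x, agree S x f p -> exists u, agree S x (snd (step p f t u)) (fst (step p f t u))) /\
  (forall x u u', agree S x (snd (step p f t u)) (fst (step p f t u)) ->
                  agree S x (snd (step p f t u')) (fst (step p f t u')) -> u = u').

Lemma step_exists (S : Setting) : exists step : Stp S, StepProp S step.
Proof.
  assert (H : forall pft : sD S * (sD S -> sR S) * sD S, exists st : Node (sD S) (sR S) -> sD S * (sD S -> sR S),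
    let p := fst (fst pft) in let f := snd (fst pft) in let t := snd pft in
    (forall u, lt _ p (fst (st u)) /\ lt _ t (fst (st u)) /\ agree S (snd (st u)) f p) /\
    (forall x, agree S x f p -> exists u, agree S x (snd (st u)) (fst (st u))) /\
    (forall x u u', agree S x (snd (st u)) (fst (st u)) -> agree S x (snd (st u')) (fst (st u')) -> u = u')).
  { intros [[p f] t]. simpl. destruct (AC S p f t) as [A [A1 [A2 [A3 A4]]]].
    assert (E : card_eq (Node (sD S) (sR S)) {U | A U}).
    { apply SB; auto. exists (fun U => exist (Bcan (sD S) (sR S)) (proj1_sig U)
         (match A1 _ (proj2_sig U) with ex_intro _ qh (conj e _) => ex_intro _ (fst qh) (ex_intro _ (snd qh) e) end)).
      intros x y e. apply (f_equal (@proj1_sig _ _)) in e. apply sig_eq; auto. }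
    destruct E as [fw [bw [E1 E2]]].
    assert (R1 : forall U : {U | A U}, exists qh : sD S * (sD S -> sR S), proj1_sig U = cyl _ _ (snd qh) (fst qh) /\
       lt _ p (fst qh) /\ lt _ t (fst qh) /\ agree S (snd qh) f p) by (intro U; apply A1; apply proj2_sig).
    destruct (choice_fun _ R1) as [rp hrp].
    exists (fun u => rp (fw u)). split; [|split].
    - intro u. destruct (hrp (fw u)) as [_ H]. exact H.
    - intros x hx. destruct (A2 x hx) as [U [hU hUx]]. exists (bw (exist _ U hU)).
      rewrite E2. destruct (hrp (exist _ U hU)) as [e _]. simpl in e. rewrite e in hUx. exact hUx.
    - intros x u u' h h'. destruct (hrp (fw u)) as [e _]. destruct (hrp (fw u')) as [e' _].
      assert (fw u = fw u').
      { apply sig_eq. apply (A3 x); [apply proj2_sig|apply proj2_sig| |].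
        + rewrite e. exact h.
        + rewrite e'. exact h'. }
      rewrite <- (E1 u), <- (E1 u'), H. auto. }
  destruct (choice_fun _ H) as [F HF].
  exists (fun p f t => F (p, f, t)). intros p f t. exact (HF (p, f, t)).
Qed.

Definition limstate (S : Setting) (xi : sK S) (T : sK S -> sD S * (sD S -> sR S)) : sD S * (sD S -> sR S) :=
  (choose (wo_min (sD S) (fun z => forall eta, lt _ eta xi -> lt _ (fst (T eta)) z) (sBnd S xi (fun eta => fst (T eta)))),
   fun b => match excluded_middle_informative (exists eta, lt _ eta xi /\ lt _ b (fst (T eta))) with
            | left h => snd (T (choose h)) b | right _ => r0 S end).

Lemma lim_L1 S xi T : forall eta, lt _ eta xi -> lt _ (fst (T eta)) (fst (limstate S xi T)).
Proof. intros eta h. unfold limstate; simpl.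
  destruct (choose_spec (wo_min (sD S) (fun z => forall eta, lt _ eta xi -> lt _ (fst (T eta)) z)
    (sBnd S xi (fun eta => fst (T eta))))) as [H _]. apply H; auto. Qed.

Lemma lim_L2 S xi T : forall b, lt _ b (fst (limstate S xi T)) -> exists eta, lt _ eta xi /\ le _ b (fst (T eta)).
Proof.
  intros b hb. apply NNPP; intro hn. unfold limstate in hb; simpl in hb.
  pose proof (proj2 (choose_spec (wo_min (sD S) (fun z => forall eta, lt _ eta xi -> lt _ (fst (T eta)) z)
     (sBnd S xi (fun eta => fst (T eta)))))) b as H.
  assert (le _ (choose (wo_min (sD S) (fun z => forall eta, lt _ eta xi -> lt _ (fst (T eta)) z)
     (sBnd S xi (fun eta => fst (T eta))))) b).
  { apply H. intros eta he. apply NNPP; intro c. apply hn. exists eta. split; auto. apply not_lt_le; auto. }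
  exact (le_not_lt _ _ _ H0 hb).
Qed.

Lemma lim_L3 S xi T b : (exists eta, lt _ eta xi /\ lt _ b (fst (T eta))) ->
  exists eta, lt _ eta xi /\ lt _ b (fst (T eta)) /\ snd (limstate S xi T) b = snd (T eta) b.
Proof.
  intro h. unfold limstate; simpl. destruct (excluded_middle_informative _) as [h'|h']; [|tauto].
  exists (choose h'). destruct (choose_spec h'). auto.
Qed.

Definition dummy (S : Setting) (eta : sK S) : sD S * (sD S -> sR S) := (se S eta, fun _ => r0 S).

Definition st (S : Setting) (step : Stp S) (y : sK S -> Node (sD S) (sR S)) : sK S -> sD S * (sD S -> sR S) :=
  Fix (lt_wf (sK S)) (fun _ => (sD S * (sD S -> sR S))%type) (fun xi rec =>
    match excluded_middle_informative (haspred (sK S) (sNMK S) xi) with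
    | left h => let eta := choose h in let s := rec eta (haspred_lt _ _ xi h) in
                step (fst s) (snd s) (se S eta) (y eta)
    | right _ => limstate S xi (fun eta => match excluded_middle_informative (lt _ eta xi) with
                   | left hl => rec eta hl | right _ => dummy S eta end)
    end).

Lemma st_unfold S step y xi : st S step y xi =
    match excluded_middle_informative (haspred (sK S) (sNMK S) xi) with
    | left h => let eta := choose h in let s := st S step y eta in
                step (fst s) (snd s) (se S eta) (y eta)
    | right _ => limstate S xi (fun eta => match excluded_middle_informative (lt _ eta xi) with
                   | left hl => st S step y eta | right _ => dummy S eta end)
    end.
Proof. unfold st at 1. rewrite Fix_eq'. reflexivity. Qed.

Lemma st_succ S step y eta : st S step y (succ _ (sNMK S) eta) =
  step (fst (st S step y eta)) (snd (st S step y eta)) (se S eta) (y eta).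
Proof.
  rewrite st_unfold. destruct (excluded_middle_informative _) as [h|h].
  - simpl. rewrite (choose_succ _ _ _ h). reflexivity.
  - exfalso. apply h. exists eta; auto.
Qed.

Lemma st_lim S step y xi : ~ haspred (sK S) (sNMK S) xi -> st S step y xi =
  limstate S xi (fun eta => match excluded_middle_informative (lt _ eta xi) with
                   | left hl => st S step y eta | right _ => dummy S eta end).
Proof. intro h. rewrite st_unfold. destruct (excluded_middle_informative _); tauto. Qed.

Lemma st_det S step y y' xi : (forall eta, lt _ eta xi -> y eta = y' eta) -> st S step y xi = st S step y' xi.
Proof.
  induction xi as [xi IH] using (well_founded_ind (lt_wf (sK S))). intro hy.
  destruct (pred_cases (sK S) (sNMK S) xi) as [[eta ->]|h].
  - rewrite !st_succ. rewrite (IH eta (succ_lt _ _ _)).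
    + rewrite (hy eta (succ_lt _ _ _)). reflexivity.
    + intros e he. apply hy. exact (lt_trans _ _ _ _ he (succ_lt _ _ _)).
  - rewrite !st_lim by auto. f_equal. apply functional_extensionality; intro eta.
    destruct (excluded_middle_informative _) as [hl|hl]; auto.
    apply IH; auto. intros e he. apply hy. exact (lt_trans _ _ _ _ he hl).
Qed.
Lemma T_in S step y xi eta : lt _ eta xi ->
  (match excluded_middle_informative (lt _ eta xi) with
   | left _ => st S step y eta | right _ => dummy S eta end) = st S step y eta.
Proof. intro h. destruct (excluded_middle_informative _); tauto. Qed.

Lemma coh S step (Hs : StepProp S step) y : forall xi eta, lt _ eta xi ->
  lt _ (fst (st S step y eta)) (fst (st S step y xi)) /\
  agree S (snd (st S step y xi)) (snd (st S step y eta)) (fst (st S step y eta)).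
Proof.
  intro xi. induction xi as [xi IH] using (well_founded_ind (lt_wf (sK S))). intros eta he.
  destruct (pred_cases (sK S) (sNMK S) xi) as [[e0 ->]|h].
  - rewrite st_succ. destruct (Hs (fst (st S step y e0)) (snd (st S step y e0)) (se S e0)) as [H0 _].
    destruct (H0 (y e0)) as [H1 [_ H3]].
    apply lt_succ_le in he. destruct he as [->|he].
    + split; auto.
    + destruct (IH e0 (succ_lt _ _ _) eta he) as [I1 I2]. split.
      * exact (lt_trans _ _ _ _ I1 H1).
      * intros b hb. rewrite H3 by (exact (lt_trans _ _ _ _ hb I1)). apply I2; auto.
  - rewrite (st_lim S step y xi h). split.
    + pose proof (lim_L1 S xi (fun eta => match excluded_middle_informative (lt _ eta xi) with
                   | left _ => st S step y eta | right _ => dummy S eta end) eta he) as H. simpl in H. rewrite T_in in H; auto.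
    + intros b hb. destruct (lim_L3 S xi (fun eta => match excluded_middle_informative (lt _ eta xi) with
                   | left _ => st S step y eta | right _ => dummy S eta end) b) as [e' [h1 [h2 h3]]].
      { exists eta. rewrite T_in; auto. }
      rewrite h3. rewrite T_in in * by auto.
      destruct (lt_total _ eta e') as [<-|[c|c]]; auto.
      * apply (IH e' h1 eta c); auto.
      * symmetry. apply (IH eta he e' c); auto.
Qed.

Lemma lim_strict S step (Hs : StepProp S step) y xi : ~ haspred (sK S) (sNMK S) xi ->
  forall b, lt _ b (fst (st S step y xi)) -> exists eta, lt _ eta xi /\ lt _ b (fst (st S step y eta)).
Proof.
  intros h b hb. rewrite (st_lim S step y xi h) in hb. destruct (lim_L2 S xi _ b hb) as [eta [he hb']].
  cbv beta in hb'. rewrite (T_in S step y xi eta he) in hb'. destruct hb' as [->|hb'].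
  - exists (succ _ (sNMK S) eta). assert (hs : lt _ (succ _ (sNMK S) eta) xi).
    { destruct (succ_least _ (sNMK S) _ _ he) as [e|e]; auto. exfalso. apply h. exists eta; auto. }
    split; auto. apply (coh S step Hs y). apply succ_lt.
  - exists eta; auto.
Qed.

Lemma cof_P S step (Hs : StepProp S step) y : forall b, exists xi, lt _ b (fst (st S step y xi)).
Proof.
  intro b. destruct (se_cof S b) as [k hk]. exists (succ _ (sNMK S) k). rewrite st_succ.
  destruct (Hs (fst (st S step y k)) (snd (st S step y k)) (se S k)) as [H0 _].
  destruct (H0 (y k)) as [_ [H2 _]]. exact (le_lt_trans _ _ _ _ hk H2).
Qed.

Definition Phi S step (Hs : StepProp S step) (y : sK S -> Node (sD S) (sR S)) : sD S -> sR S :=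
  fun b => snd (st S step y (choose (cof_P S step Hs y b))) b.

Lemma Phi_agree S step Hs y xi : agree S (Phi S step Hs y) (snd (st S step y xi)) (fst (st S step y xi)).
Proof.
  intros b hb. unfold Phi. set (xi' := choose (cof_P S step Hs y b)).
  assert (hb' : lt _ b (fst (st S step y xi'))) by exact (choose_spec (cof_P S step Hs y b)).
  destruct (lt_total _ xi xi') as [<-|[c|c]]; auto.
  - apply (coh S step Hs y xi' xi c); auto.
  - symmetry. apply (coh S step Hs y xi xi' c); auto.
Qed.

Lemma key S step (Hs : StepProp S step) y y' xi :
  agree S (Phi S step Hs y') (Phi S step Hs y) (fst (st S step y xi)) ->
  forall eta, lt _ eta xi -> y' eta = y eta.
Proof.
  intros H eta. induction eta as [eta IH] using (well_founded_ind (lt_wf (sK S))). intro he.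
  assert (Est : st S step y' eta = st S step y eta).
  { apply st_det. intros e h. apply IH; auto. exact (lt_trans _ _ _ _ h he). }
  destruct (Hs (fst (st S step y eta)) (snd (st S step y eta)) (se S eta)) as [_ [_ H3]].
  apply (H3 (Phi S step Hs y')).
  - rewrite <- Est. pose proof (Phi_agree S step Hs y' (succ _ (sNMK S) eta)) as A. rewrite st_succ in A. exact A.
  - intros b hb. pose proof (Phi_agree S step Hs y (succ _ (sNMK S) eta)) as A. rewrite st_succ in A.
    rewrite <- A by auto. apply H.
    assert (hle : le _ (succ _ (sNMK S) eta) xi) by (apply succ_least; auto).
    destruct hle as [<-|hlt].
    + rewrite st_succ. auto.
    + pose proof (proj1 (coh S step Hs y xi _ hlt)) as C. rewrite st_succ in C. exact (lt_trans _ _ _ _ hb C).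
Qed.
Definition node0 (S : Setting) : Node (sD S) (sR S) :=
  exist _ (cyl _ _ (fun _ => r0 S) (se S (sk0 S))) (ex_intro _ (se S (sk0 S)) (ex_intro _ (fun _ => r0 S) eq_refl)).

Definition ysur S (step : Stp S) (x : sD S -> sR S) : sK S -> Node (sD S) (sR S) :=
  Fix (lt_wf (sK S)) (fun _ => Node (sD S) (sR S)) (fun xi rec =>
    let s := st S step (fun eta => match excluded_middle_informative (lt _ eta xi) with
                 | left h => rec eta h | right _ => node0 S end) xi in
    match excluded_middle_informative (exists u, agree S x (snd (step (fst s) (snd s) (se S xi) u))
                                                      (fst (step (fst s) (snd s) (se S xi) u))) with
    | left h => choose h | right _ => node0 S end).

Lemma ysur_eq S step x xi : ysur S step x xi =
    let s := st S step (ysur S step x) xi in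
    match excluded_middle_informative (exists u, agree S x (snd (step (fst s) (snd s) (se S xi) u))
                                                      (fst (step (fst s) (snd s) (se S xi) u))) with
    | left h => choose h | right _ => node0 S end.
Proof.
  unfold ysur at 1. rewrite Fix_eq'. fold (ysur S step x). simpl.
  rewrite (st_det S step (fun eta => match excluded_middle_informative (lt _ eta xi) with
                 | left _ => ysur S step x eta | right _ => node0 S end) (ysur S step x) xi).
  - reflexivity.
  - intros eta he. destruct (excluded_middle_informative _); tauto.
Qed.

Lemma ysur_inv S step (Hs : StepProp S step) x : forall xi,
  agree S x (snd (st S step (ysur S step x) xi)) (fst (st S step (ysur S step x) xi)).
Proof.
  intro xi. induction xi as [xi IH] using (well_founded_ind (lt_wf (sK S))).
  destruct (pred_cases (sK S) (sNMK S) xi) as [[eta ->]|h].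
  - rewrite st_succ. specialize (IH eta (succ_lt _ _ _)).
    rewrite (ysur_eq S step x eta). simpl.
    destruct (excluded_middle_informative _) as [h|h].
    + exact (choose_spec h).
    + exfalso. apply h. destruct (Hs (fst (st S step (ysur S step x) eta)) (snd (st S step (ysur S step x) eta)) (se S eta)) as [_ [H2 _]].
      apply H2. exact IH.
  - intros b hb. destruct (lim_strict S step Hs _ xi h b hb) as [eta [he hb']].
    rewrite (proj2 (coh S step Hs (ysur S step x) xi eta he)) by auto. apply IH; auto.
Qed.

Lemma Phi_ysur S step Hs x : Phi S step Hs (ysur S step x) = x.
Proof.
  apply functional_extensionality; intro b. unfold Phi. symmetry. apply ysur_inv; auto.
  exact (choose_spec (cof_P S step Hs (ysur S step x) b)).
Qed.

Lemma Phi_inj S step Hs y y' : Phi S step Hs y = Phi S step Hs y' -> y = y'.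
Proof.
  intro e. apply functional_extensionality; intro eta. symmetry.
  apply (key S step Hs y y' (succ _ (sNMK S) eta)); [|apply succ_lt].
  intros b _. rewrite e. reflexivity.
Qed.

Theorem homeo_main (S : Setting) : homeomorphic (@bd_open (sK S) (Node (sD S) (sR S))) (@bd_open (sD S) (sR S)).
Proof.
  destruct (step_exists S) as [step Hs].
  exists (Phi S step Hs), (ysur S step). split; [|split; [|split]].
  - intro y. apply (Phi_inj S step Hs). apply Phi_ysur.
  - intro x. apply Phi_ysur.
  - intros V hV y hy. destruct (hV _ hy) as [a ha]. destruct (cof_P S step Hs y a) as [xi hxi].
    exists xi. intros y' hy'. apply ha. intros b hb.
    assert (Est : st S step y' xi = st S step y xi) by (apply st_det; auto).
    assert (hb' : lt _ b (fst (st S step y xi))) by (exact (lt_trans _ _ _ _ hb hxi)).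
    rewrite (Phi_agree S step Hs y' xi) by (rewrite Est; auto).
    rewrite (Phi_agree S step Hs y xi) by auto. rewrite Est. reflexivity.
  - intros U hU x hx. destruct (hU _ hx) as [xi hxi]. exists (fst (st S step (ysur S step x) xi)).
    intros x' hx'. apply hxi. intros eta he.
    apply (key S step Hs (ysur S step x) (ysur S step x') xi); auto.
    rewrite !Phi_ysur. exact hx'.
Qed.
Lemma cof_seq (D K : WO) : cof_is D K -> exists e : K -> D, forall x, exists k, le D x (e k).
Proof.
  intros [[S [HS [f [g [h1 h2]]]]] _]. exists (fun k => proj1_sig (g k)). intro x.
  destruct (HS x) as [y [hy hxy]]. exists (f (exist _ y hy)). rewrite h1. exact hxy.
Qed.

Lemma cof_card_le (D K : WO) : cof_is D K -> card_le K D.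
Proof.
  intros [[S [HS [f [g [h1 h2]]]]] _]. exists (fun k => proj1_sig (g k)). intros x y e.
  rewrite <- (h2 x), <- (h2 y). f_equal. apply sig_eq. exact e.
Qed.

Lemma space_facts (D K : WO) (R : Type) : infinite D -> is_cardinal D -> cof_is D K -> regular_cardinal K ->
  (exists r0 r1 : R, r0 <> r1) -> (card_le K R \/ exists a, card_le K (seg D a)) ->
  homeomorphic (@bd_open K (Node D R)) (@bd_open D R) /\ weight_is (@bd_open D R) (Node D R).
Proof.
  intros Hi Hc Hcof [HKi [HKc HKcof]] [r0 [r1 hr]] Hbl.
  pose proof (cof_no_max D K Hcof HKi) as NM.
  pose proof (cof_no_max K K HKcof HKi) as NMK.
  destruct (cof_seq D K Hcof) as [e he].
  destruct HKi as [k0f hk0f].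
  pose (S := mkS D K R r0 r1 hr NM Hi Hc NMK (k0f 0) (small_bounded D K Hcof HKc) e he Hbl).
  split.
  - exact (homeo_main S).
  - exact (weight_can D R NM r0 r1 hr).
Qed.

Lemma facts_k (kappa mu : WO) : regular_cardinal kappa -> singular_cardinal mu -> cof_is mu kappa ->
  forall k, homeomorphic (@bd_open kappa (Node (sp_dom kappa mu k) (sp_cod kappa mu k))) (sp_open kappa mu k) /\
            weight_is (sp_open kappa mu k) (Node (sp_dom kappa mu k) (sp_cod kappa mu k)).
Proof.
  intros HK HM Hcof k. pose proof HK as [HKi [HKc HKcof]]. pose proof HM as [HMi [HMc HMs]].
  destruct k; unfold sp_open; simpl; apply space_facts; auto.
  - apply infinite_two; auto.
  - left. apply cof_card_le; auto.
  - exists true, false. discriminate.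
  - right. apply bounded_copy; auto.
  - apply infinite_two; auto.
  - left. apply card_le_refl.
  - apply infinite_two; auto.
  - left. apply cof_card_le; auto.
Qed.

Theorem mainTheorem3 (kappa mu : WO) :
  regular_cardinal kappa -> singular_cardinal mu -> cof_is mu kappa ->
  forall k k' : space_kind,
    homeomorphic (sp_open kappa mu k) (sp_open kappa mu k') <->
    same_weight (sp_open kappa mu k) (sp_open kappa mu k').
Proof.
  intros HK HM Hcof k k'.
  destruct (facts_k kappa mu HK HM Hcof k) as [H1 W1].
  destruct (facts_k kappa mu HK HM Hcof k') as [H2 W2].
  split.
  - intro Hh. exists (Node (sp_dom kappa mu k) (sp_cod kappa mu k)). split; auto.
    exact (weight_transfer _ _ _ _ _ Hh W1).
  - intros [L [WL WL']].
    assert (E : card_eq (Node (sp_dom kappa mu k) (sp_cod kappa mu k)) (Node (sp_dom kappa mu k') (sp_cod kappa mu k'))).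
    { eapply card_eq_trans; [exact (weight_unique _ _ _ _ W1 WL)|]. exact (weight_unique _ _ _ _ WL' W2). }
    eapply homeo_trans; [apply homeo_sym; exact H1|].
    eapply homeo_trans; [apply homeo_cod; exact E|exact H2].
Qed.
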